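(* Let $M$ be a bi-variate homogeneous symmetric mean having a symmetric asymptotic expansion with coefficients $(a_n)_{n\ge0}$. Then for fixed real $s,t$ with $s\ne\pm t$, $M(x+s,x+t)\sim\sum_{m\ge0}a_m(s,t)x^{-m+1}$ as $x\to\infty$, where $$a_m(s,t)=2^{-m}\sum_{n=0}^{\lfloor m/2\rfloor}a_n\binom{1-2n}{m-2n}(t-s)^{2n}(t+s)^{m-2n},\qquad m\in\mathbb N_0.$$
   Context: A bi-variate mean is $M:(0,\infty)^2\to(0,\infty)$ with $\min(s,t)\le M(s,t)\le\max(s,t)$; symmetric: $M(s,t)=M(t,s)$; homogeneous: $M(\lambda s,\lambda t)=\lambda M(s,t)$. $M$ has a symmetric asymptotic expansion with coefficients $(a_n)$ if for every fixed real $t$ and every $N\ge0$, $M(x-t,x+t)=\sum_{n=0}^Na_nt^{2n}x^{-2n+1}+o(x^{-2N+1})$ as $x\to\infty$. The binomial coefficient $\binom{r}{k}=r(r-1)\cdots(r-k+1)/k!$ for real $r$. The notation $F(x)\sim\sum_m c_mx^{-m+1}$ means $F(x)=\sum_{m=0}^Nc_mx^{-m+1}+o(x^{-N+1})$ for every $N$. *)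

(* Defs.v *)
From Stdlib Require Import Reals ZArith Arith.
Open Scope R_scope.

Fixpoint falling (r : R) (k : nat) : R :=
  match k with
  | O => 1
  | S k' => falling r k' * (r - INR k')
  end.

Definition gbinom (r : R) (k : nat) : R := falling r k / INR (fact k).

(* A bi-variate mean on (0,oo)^2 (values outside the domain are irrelevant). *)
Definition is_mean (M : R -> R -> R) : Prop :=
  forall s t, 0 < s -> 0 < t -> Rmin s t <= M s t <= Rmax s t.

Definition is_symmetric (M : R -> R -> R) : Prop :=
  forall s t, 0 < s -> 0 < t -> M s t = M t s.

Definition is_homogeneous (M : R -> R -> R) : Prop :=
  forall l s t, 0 < l -> 0 < s -> 0 < t -> M (l * s) (l * t) = l * M s t.

Definition little_o_infty (f g : R -> R) : Prop :=
  forall eps, 0 < eps -> exists X, forall x, X < x -> Rabs (f x) <= eps * Rabs (g x).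

Definition sym_asymp_expansion (M : R -> R -> R) (a : nat -> R) : Prop :=
  forall (t : R) (N : nat),
    little_o_infty
      (fun x => M (x - t) (x + t)
                - sum_f_R0 (fun n => a n * t ^ (2 * n) * powerRZ x (1 - 2 * Z.of_nat n)) N)
      (fun x => powerRZ x (1 - 2 * Z.of_nat N)).

Definition coef_st (a : nat -> R) (s t : R) (m : nat) : R :=
  (/ 2) ^ m *
  sum_f_R0 (fun n => a n * gbinom (1 - 2 * INR n) (m - 2 * n)
                     * (t - s) ^ (2 * n) * (t + s) ^ (m - 2 * n)) (Nat.div2 m).

Definition asymp_series (F : R -> R) (c : nat -> R) : Prop :=
  forall N : nat,
    little_o_infty
      (fun x => F x - sum_f_R0 (fun m => c m * powerRZ x (1 - Z.of_nat m)) N)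
      (fun x => powerRZ x (1 - Z.of_nat N)).

(* Main.v *)
Require Import Defs.
From Stdlib Require Import Reals ZArith Lia Lra.
From Coquelicot Require Import Coquelicot.
Open Scope R_scope.

Definition phi (x c P : R) (u : R) := Rpower (x + c*u) P.
Definition form (x c P : R) (k : nat) (u : R) :=
  falling P k * c^k * Rpower (x + c*u) (P - INR k).

Lemma Rpower_gt0 a b : 0 < Rpower a b.
Proof. unfold Rpower; apply exp_pos. Qed.

Lemma loc_pos x c u : 0 < x + c*u -> locally u (fun v => 0 < x + c*v).
Proof.
  intros H.
  assert (Hp : 0 < (x+c*u)/(Rabs c+1)).
  { apply Rdiv_lt_0_compat; [lra| pose proof (Rabs_pos c); lra]. }
  exists (mkposreal _ Hp). intros v Hv. change (Rabs (v - u) < (x+c*u)/(Rabs c+1)) in Hv.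
  assert (Hc: Rabs (c*(v-u)) < x + c*u).
  { rewrite Rabs_mult.
    apply Rle_lt_trans with (Rabs c * ((x+c*u)/(Rabs c+1))).
    - apply Rmult_le_compat_l; [apply Rabs_pos|lra].
    - pose proof (Rabs_pos c).
      apply Rlt_le_trans with ((Rabs c + 1) * ((x+c*u)/(Rabs c+1))).
      + apply Rmult_lt_compat_r; lra.
      + right; field; lra. }
  apply Rabs_def2 in Hc. lra.
Qed.

Lemma is_derive_form x c P k u : 0 < x + c*u ->
  is_derive (form x c P k) u (form x c P (S k) u).
Proof.
  intros H. unfold form.
  assert (H1 : is_derive (fun z => Rpower z (P - INR k)) (x + c*u)
                 ((P - INR k) * Rpower (x+c*u) (P - INR k - 1))).
  { apply is_derive_Reals. apply derivable_pt_lim_power. exact H. }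
  assert (H2 : is_derive (fun u => x + c*u) u c).
  { auto_derive; auto; ring. }
  pose proof (is_derive_comp _ _ _ _ _ H1 H2) as H3.
  apply (is_derive_scal _ _ (falling P k * c^k)) in H3.
  replace (falling P (S k) * c ^ S k * Rpower (x + c * u) (P - INR (S k)))
    with (falling P k * c ^ k * scal c ((P - INR k) * Rpower (x + c * u) (P - INR k - 1))).
  exact H3.
  rewrite S_INR. simpl. unfold scal; simpl; unfold mult; simpl.
  replace (P - (INR k + 1)) with (P - INR k - 1) by ring. ring.
Qed.

Lemma Dn_phi x c P k : forall u, 0 < x + c*u ->
  Derive_n (phi x c P) k u = form x c P k u.
Proof.
  induction k as [|k IH]; intros u H.
  - simpl. unfold phi, form. simpl. rewrite Rminus_0_r. ring.
  - simpl. rewrite (Derive_ext_loc _ (form x c P k)).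
    + apply is_derive_unique, is_derive_form; auto.
    + destruct (loc_pos x c u H) as [e He]. exists e. intros v Hv. apply IH, He, Hv.
Qed.

Lemma taylor_exp x c P K : 2 * Rabs c < x ->
  exists z, 0 < z < 1 /\
   Rpower (x + c) P = sum_f_R0 (fun k => gbinom P k * c^k * Rpower x (P - INR k)) K
     + falling P (S K) / INR (fact (S K)) * c^(S K) * Rpower (x + c*z) (P - INR (S K)).
Proof.
  intros Hx.
  assert (Hpos : forall t, 0 <= t <= 1 -> 0 < x + c*t).
  { intros t Ht. assert (Rabs (c*t) <= Rabs c).
    { rewrite Rabs_mult. rewrite (Rabs_right t) by lra.
      pose proof (Rabs_pos c). nra. }
    apply Rabs_le_between in H. pose proof (Rabs_pos c). lra. }
  destruct (Taylor_Lagrange (phi x c P) K 0 1 Rlt_0_1) as [z [Hz E]].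
  { intros t Ht k Hk. destruct k as [|k]; simpl; auto.
    exists (form x c P (S k) t).
    apply is_derive_ext_loc with (form x c P k).
    - destruct (loc_pos x c t (Hpos t Ht)) as [e He]. exists e. intros v Hv.
      symmetry. apply Dn_phi, He, Hv.
    - apply is_derive_form, Hpos, Ht. }
  exists z. split; [exact Hz|].
  unfold phi in E at 1. rewrite Rmult_1_r in E. rewrite E.
  rewrite Dn_phi by (apply Hpos; lra).
  f_equal.
  - apply sum_eq. intros i _. rewrite Dn_phi by (apply Hpos; lra).
    unfold form, gbinom. rewrite Rmult_0_r, Rplus_0_r, Rminus_0_r, pow1.
    field. apply INR_fact_neq_0.
  - unfold form. rewrite Rminus_0_r, pow1. field. apply INR_fact_neq_0.
Qed.

Lemma Rpower_shift_bound x w e : 0 < x -> 2 * Rabs w <= x -> e <= 0 ->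
  Rpower (x + w) e <= Rpower (/2) e * Rpower x e.
Proof.
  intros Hx Hw He.
  assert (Hw' : x/2 <= x + w) by (pose proof (proj1 (Rabs_le_between w (Rabs w)) (Rle_refl _)); lra).
  rewrite Rpower_mult_distr by lra.
  replace (/2 * x) with (x/2) by field.
  replace e with (- - e) by ring. rewrite (Rpower_Ropp (x+w) (-e)), (Rpower_Ropp (x/2) (-e)).
  apply Rinv_le_contravar. apply Rpower_gt0.
  apply Rle_Rpower_l; lra.
Qed.

Lemma powerRZ_Rp x z : 0 < x -> powerRZ x z = Rpower x (IZR z).
Proof. apply powerRZ_Rpower. Qed.

Lemma Fprime (p : Z) (K : nat) (c : R) : (p - Z.of_nat K - 1 <= 0)%Z ->
  exists C X, forall x, X < x ->
   Rabs (powerRZ (x+c) p - sum_f_R0 (fun k => gbinom (IZR p) k * c^k * powerRZ x (p - Z.of_nat k)) K)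
     <= C * powerRZ x (p - Z.of_nat K - 1).
Proof.
  intros Hp. set (e := IZR p - INR (S K)).
  assert (He : e <= 0).
  { unfold e. rewrite S_INR, INR_IZR_INZ. apply IZR_le in Hp. rewrite !minus_IZR in Hp. lra. }
  exists (Rabs (falling (IZR p) (S K) / INR (fact (S K))) * Rabs c ^ S K * Rpower (/2) e).
  exists (2 * Rabs c). intros x Hx.
  assert (Hx0 : 0 < x) by (pose proof (Rabs_pos c); lra).
  destruct (taylor_exp x c (IZR p) K Hx) as [z [Hz E]].
  assert (Hxc : 0 < x + c).
  { pose proof (proj1 (Rabs_le_between c (Rabs c)) (Rle_refl _)). pose proof (Rabs_pos c). lra. }
  rewrite (powerRZ_Rp _ _ Hxc), E.
  rewrite (sum_eq (fun k => gbinom (IZR p) k * c ^ k * powerRZ x (p - Z.of_nat k)) (fun k => gbinom (IZR p) k * c ^ k * Rpower x (IZR p - INR k))).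
  2:{ intros i _. rewrite powerRZ_Rp by lra. rewrite minus_IZR, <- INR_IZR_INZ. reflexivity. }
  rewrite powerRZ_Rp by lra.
  replace (IZR (p - Z.of_nat K - 1)) with e.
  2:{ unfold e. rewrite !minus_IZR, <- INR_IZR_INZ, S_INR. ring. }
  fold e.
  replace (sum_f_R0 (fun k : nat => gbinom (IZR p) k * c ^ k * Rpower x (IZR p - INR k)) K +
    falling (IZR p) (S K) / INR (fact (S K)) * c ^ S K * Rpower (x + c * z) e -
    sum_f_R0 (fun k : nat => gbinom (IZR p) k * c ^ k * Rpower x (IZR p - INR k)) K)
   with (falling (IZR p) (S K) / INR (fact (S K)) * c ^ S K * Rpower (x + c * z) e) by ring.
  rewrite !Rabs_mult, <- RPow_abs.
  rewrite (Rabs_right (Rpower _ _)) by (left; apply Rpower_gt0).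
  rewrite !Rmult_assoc. apply Rmult_le_compat_l; [apply Rabs_pos|].
  apply Rmult_le_compat_l; [apply pow_le, Rabs_pos|].
  apply Rpower_shift_bound; auto.
  rewrite Rabs_mult, (Rabs_right z) by lra. pose proof (Rabs_pos c). nra.
Qed.

Lemma lo_ext f g h : (forall x, f x = g x) -> little_o_infty f h -> little_o_infty g h.
Proof. intros E H eps He. destruct (H eps He) as [X HX]. exists X. intros x Hx. rewrite <- E. auto. Qed.

Lemma lo_add f1 f2 h : little_o_infty f1 h -> little_o_infty f2 h ->
  little_o_infty (fun x => f1 x + f2 x) h.
Proof.
  intros H1 H2 eps He.
  destruct (H1 (eps/2)) as [X1 HX1]; [lra|]. destruct (H2 (eps/2)) as [X2 HX2]; [lra|].
  exists (Rmax X1 X2). intros x Hx.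
  assert (X1 < x) by (eapply Rle_lt_trans; [apply Rmax_l|exact Hx]).
  assert (X2 < x) by (eapply Rle_lt_trans; [apply Rmax_r|exact Hx]).
  eapply Rle_trans; [apply Rabs_triang|].
  specialize (HX1 x H). specialize (HX2 x H0). lra.
Qed.

Lemma lo_trans f g h : little_o_infty f g ->
  (exists K X, forall x, X < x -> Rabs (g x) <= K * Rabs (h x)) -> little_o_infty f h.
Proof.
  intros H [K [X HK]] eps He.
  assert (HK1 : 0 < Rabs K + 1) by (pose proof (Rabs_pos K); lra).
  destruct (H (eps / (Rabs K + 1))) as [X1 HX1].
  { apply Rdiv_lt_0_compat; lra. }
  exists (Rmax X X1). intros x Hx.
  assert (X < x) by (eapply Rle_lt_trans; [apply Rmax_l|exact Hx]).
  assert (X1 < x) by (eapply Rle_lt_trans; [apply Rmax_r|exact Hx]).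
  specialize (HX1 x H1). specialize (HK x H0).
  eapply Rle_trans; [exact HX1|].
  assert (Rabs (g x) <= (Rabs K + 1) * Rabs (h x)).
  { eapply Rle_trans; [exact HK|]. apply Rmult_le_compat_r; [apply Rabs_pos|].
    pose proof (Rle_abs K). lra. }
  apply Rle_trans with (eps / (Rabs K + 1) * ((Rabs K + 1) * Rabs (h x))).
  - apply Rmult_le_compat_l; [|exact H2]. left; apply Rdiv_lt_0_compat; lra.
  - right. field. lra.
Qed.

Lemma lo_O f e : (exists C X, forall x, X < x -> Rabs (f x) <= C * powerRZ x e) ->
  little_o_infty f (fun x => powerRZ x (e+1)).
Proof.
  intros [C [X H]] eps He.
  exists (Rmax (Rmax X 1) (Rabs C / eps)). intros x Hx.
  assert (X < x) by (eapply Rle_lt_trans; [eapply Rle_trans; [apply Rmax_l|apply Rmax_l]|exact Hx]).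
  assert (1 < x) by (eapply Rle_lt_trans; [eapply Rle_trans; [apply Rmax_r|apply Rmax_l]|exact Hx]).
  assert (Rabs C / eps < x) by (eapply Rle_lt_trans; [apply Rmax_r|exact Hx]).
  rewrite powerRZ_add by lra. simpl (powerRZ x 1). rewrite Rmult_1_r.
  pose proof (powerRZ_lt x e ltac:(lra)).
  rewrite (Rabs_right (powerRZ x e * x)) by (left; apply Rmult_lt_0_compat; lra).
  eapply Rle_trans; [apply H; auto|].
  assert (Rabs C < eps * x).
  { apply (Rmult_lt_compat_r eps) in H2; [|lra]. unfold Rdiv in H2.
    rewrite Rmult_assoc, Rinv_l, Rmult_1_r in H2; lra. }
  pose proof (Rle_abs C). nra.
Qed.

Lemma pow_mono x a b : 1 <= x -> (a <= b)%Z -> powerRZ x a <= powerRZ x b.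
Proof.
  intros Hx Hab. replace b with (a + (b - a))%Z by lia.
  rewrite powerRZ_add by lra.
  destruct (Z_of_nat_complete (b - a) ltac:(lia)) as [n Hn]. rewrite Hn, <- pow_powerRZ.
  pose proof (powerRZ_lt x a ltac:(lra)). pose proof (pow_R1_Rle x n Hx). nra.
Qed.

Lemma lo_mono f a b : little_o_infty f (fun x => powerRZ x a) -> (a <= b)%Z ->
  little_o_infty f (fun x => powerRZ x b).
Proof.
  intros H Hab. apply (lo_trans _ _ _ H). exists 1, 1. intros x Hx.
  rewrite !Rabs_right by (left; apply powerRZ_lt; lra).
  rewrite Rmult_1_l. apply pow_mono; [lra|exact Hab].
Qed.

Lemma lo_shift f g c : little_o_infty f g ->
  little_o_infty (fun x => f (x+c)) (fun x => g (x+c)).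
Proof.
  intros H eps He. destruct (H eps He) as [X HX]. exists (X - c). intros x Hx. apply HX. lra.
Qed.

Definition asymN (F : R -> R) (c : nat -> R) (N : nat) :=
  little_o_infty (fun x => F x - sum_f_R0 (fun m => c m * powerRZ x (1 - Z.of_nat m)) N)
    (fun x => powerRZ x (1 - Z.of_nat N)).

Lemma asymN_add F1 F2 c1 c2 N : asymN F1 c1 N -> asymN F2 c2 N ->
  asymN (fun x => F1 x + F2 x) (fun m => c1 m + c2 m) N.
Proof.
  intros H1 H2. unfold asymN.
  eapply lo_ext; [|apply (lo_add _ _ _ H1 H2)]. intro x. cbv beta.
  rewrite (sum_eq (fun m => (c1 m + c2 m) * powerRZ x (1 - Z.of_nat m)) (fun m => c1 m * powerRZ x (1 - Z.of_nat m) + c2 m * powerRZ x (1 - Z.of_nat m)))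
    by (intros; ring).
  rewrite plus_sum. ring.
Qed.

Lemma asymN_scal F c k N : asymN F c N -> asymN (fun x => k * F x) (fun m => k * c m) N.
Proof.
  intros H. unfold asymN.
  assert (H' : little_o_infty (fun x => k * (F x - sum_f_R0 (fun m => c m * powerRZ x (1 - Z.of_nat m)) N))
     (fun x => powerRZ x (1 - Z.of_nat N))).
  { apply (lo_trans _ (fun x => powerRZ x (1 - Z.of_nat N))).
    2:{ exists 1, 0. intros; lra. }
    intros eps He. destruct (H (eps / (Rabs k + 1))) as [X HX].
    { apply Rdiv_lt_0_compat; [lra| pose proof (Rabs_pos k); lra]. }
    exists X. intros x Hx. rewrite Rabs_mult. specialize (HX x Hx).
    pose proof (Rabs_pos k).
    apply Rle_trans with (Rabs k * (eps / (Rabs k + 1) * Rabs (powerRZ x (1 - Z.of_nat N)))).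
    - apply Rmult_le_compat_l; auto.
    - pose proof (Rabs_pos (powerRZ x (1 - Z.of_nat N))).
      apply Rle_trans with ((Rabs k + 1) * (eps / (Rabs k + 1) * Rabs (powerRZ x (1 - Z.of_nat N)))).
      + apply Rmult_le_compat_r; [|lra]. apply Rmult_le_pos; [|auto]. left; apply Rdiv_lt_0_compat; lra.
      + right. field. lra. }
  eapply lo_ext; [|exact H']. intro x. cbv beta.
  rewrite (sum_eq (fun m => k * c m * powerRZ x (1 - Z.of_nat m))
    (fun m => c m * powerRZ x (1 - Z.of_nat m) * k)) by (intros; ring). rewrite <- scal_sum. ring.
Qed.

Lemma asymN_coef F c c' N : (forall m, (m <= N)%nat -> c m = c' m) -> asymN F c N -> asymN F c' N.
Proof.
  intros E H. unfold asymN. eapply lo_ext; [|exact H]. intro x. cbv beta.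
  rewrite (sum_eq (fun m => c m * powerRZ x (1 - Z.of_nat m)) (fun m => c' m * powerRZ x (1 - Z.of_nat m))); auto.
  intros i Hi. rewrite E; auto.
Qed.

Lemma asymN_fun F G c N : (forall x, F x = G x) -> asymN F c N -> asymN G c N.
Proof. intros E H. unfold asymN. eapply lo_ext; [|exact H]. intro x. cbv beta. rewrite E. auto. Qed.

Lemma asymN_sum (w : nat -> R) (F : nat -> R -> R) (E : nat -> nat -> R) N :
  (forall n, asymN (F n) (E n) N) -> forall L,
  asymN (fun x => sum_f_R0 (fun n => w n * F n x) L) (fun m => sum_f_R0 (fun n => w n * E n m) L) N.
Proof.
  intros H L. induction L as [|L IH].
  - simpl. apply asymN_scal, H.
  - simpl. apply (asymN_add _ _ _ _ _ IH). apply asymN_scal, H.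
Qed.

Lemma sum_zero f N : (forall m, (m <= N)%nat -> f m = 0) -> sum_f_R0 f N = 0.
Proof.
  induction N as [|N IH]; intros H; simpl.
  - apply H; lia.
  - rewrite IH by (intros; apply H; lia). rewrite H by lia. ring.
Qed.

Lemma sum_shift f j K : (forall m, (m < j)%nat -> f m = 0) ->
  sum_f_R0 f (j + K) = sum_f_R0 (fun k => f (j+k)%nat) K.
Proof.
  intros H. induction K as [|K IH].
  - rewrite Nat.add_0_r. simpl. destruct j as [|j]; simpl; [reflexivity|].
    rewrite sum_zero by (intros; apply H; lia). rewrite Nat.add_0_r. ring.
  - rewrite Nat.add_succ_r. simpl. rewrite IH. rewrite Nat.add_succ_r. reflexivity.
Qed.

Lemma sum_tail f L k : (forall n, (L < n <= L + k)%nat -> f n = 0) ->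
  sum_f_R0 f (L + k) = sum_f_R0 f L.
Proof.
  induction k as [|k IH]; intros H.
  - rewrite Nat.add_0_r. reflexivity.
  - rewrite Nat.add_succ_r. simpl. rewrite IH by (intros; apply H; lia).
    rewrite H by lia. ring.
Qed.

Definition en (c : R) (n m : nat) : R :=
  if (2*n <=? m)%nat then gbinom (1 - 2*INR n) (m - 2*n) * c^(m-2*n) else 0.

Lemma IZR_p n : IZR (1 - 2 * Z.of_nat n) = 1 - 2 * INR n.
Proof. rewrite minus_IZR, mult_IZR, <- INR_IZR_INZ. reflexivity. Qed.

Lemma expand_n c n N : asymN (fun x => powerRZ (x+c) (1 - 2 * Z.of_nat n)) (en c n) N.
Proof.
  unfold asymN. destruct (le_lt_dec (2*n) N) as [Hle|Hlt].
  - set (K := (N - 2*n)%nat).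
    destruct (Fprime (1 - 2 * Z.of_nat n) K c) as [C [X HB]]; [unfold K; lia|].
    pose proof (lo_O _ _ (ex_intro _ C (ex_intro _ X HB))) as H.
    replace (1 - Z.of_nat N)%Z with (1 - 2 * Z.of_nat n - Z.of_nat K - 1 + 1)%Z by (unfold K; lia).
    eapply lo_ext; [|exact H]. intro x. cbv beta. f_equal.
    replace N with (2*n + K)%nat by (unfold K; lia).
    rewrite sum_shift.
    2:{ intros m Hm. unfold en. replace (2 * n <=? m)%nat with false; [ring|].
        symmetry. apply Nat.leb_gt. lia. }
    apply sum_eq. intros k _. unfold en.
    replace (2 * n <=? 2 * n + k)%nat with true by (symmetry; apply Nat.leb_le; lia).
    replace (2 * n + k - 2 * n)%nat with k by lia.
    rewrite IZR_p. f_equal. f_equal. lia.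
  - assert (H : little_o_infty (fun x => powerRZ (x+c) (1 - 2 * Z.of_nat n))
                  (fun x => powerRZ x (1 - 2 * Z.of_nat n + 1))).
    { apply lo_O. exists (Rpower (/2) (IZR (1 - 2 * Z.of_nat n))), (2 * Rabs c).
      intros x Hx. pose proof (Rabs_pos c).
      assert (0 < x + c).
      { pose proof (proj1 (Rabs_le_between c (Rabs c)) (Rle_refl _)). lra. }
      rewrite Rabs_right by (left; apply powerRZ_lt; lra).
      rewrite !powerRZ_Rp by lra. apply Rpower_shift_bound; try lra.
      rewrite IZR_p. pose proof (pos_INR n). assert (1 <= INR n).
      { replace 1 with (INR 1) by reflexivity. apply le_INR. lia. }
      lra. }
    apply (lo_mono _ _ (1 - Z.of_nat N)) in H; [|lia].
    eapply lo_ext; [|exact H]. intro x. cbv beta.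
    rewrite sum_zero; [ring|]. intros m Hm. unfold en.
    replace (2 * n <=? m)%nat with false; [ring|]. symmetry. apply Nat.leb_gt. lia.
Qed.

Lemma coef_match a s t N m : (m <= N)%nat ->
  sum_f_R0 (fun n => a n * ((t-s)/2)^(2*n) * en ((s+t)/2) n m) N = coef_st a s t m.
Proof.
  intros Hm. pose proof (Nat.div2_odd m) as Hd.
  assert (Hb : (Nat.b2n (Nat.odd m) <= 1)%nat) by (destruct (Nat.odd m); simpl; lia).
  set (L := Nat.div2 m) in *.
  assert (HL : (L <= N)%nat) by lia.
  replace N with (L + (N - L))%nat at 1 by lia.
  rewrite sum_tail.
  2:{ intros n Hn. unfold en. replace (2 * n <=? m)%nat with false; [ring|].
      symmetry. apply Nat.leb_gt. lia. }
  unfold coef_st. fold L. rewrite scal_sum. apply sum_eq. intros n Hn.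
  unfold en. replace (2 * n <=? m)%nat with true by (symmetry; apply Nat.leb_le; lia).
  replace ((/2)^m) with ((/2)^(2*n) * (/2)^(m-2*n)).
  2:{ rewrite <- pow_add. f_equal. lia. }
  unfold Rdiv. rewrite !Rpow_mult_distr. rewrite (Rplus_comm s t). ring.
Qed.

Lemma shift_pow_bound c N : exists K X, forall x, X < x ->
  Rabs (powerRZ (x+c) (1 - 2*Z.of_nat N)) <= K * Rabs (powerRZ x (1 - Z.of_nat N)).
Proof.
  pose proof (Rabs_pos c).
  pose proof (proj1 (Rabs_le_between c (Rabs c)) (Rle_refl _)).
  destruct N as [|N].
  - exists 2, (2 * Rabs c + 1). intros x Hx.
    change (1 - 2 * Z.of_nat 0)%Z with (Z.succ 0). change (1 - Z.of_nat 0)%Z with (Z.succ 0).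
    rewrite !powerRZ_1. rewrite !Rabs_right by lra. lra.
  - exists (Rpower (/2) (IZR (1 - 2 * Z.of_nat (S N)))), (2 * Rabs c + 1). intros x Hx.
    rewrite !Rabs_right by (left; apply powerRZ_lt; lra).
    apply Rle_trans with (Rpower (/ 2) (IZR (1 - 2 * Z.of_nat (S N))) * powerRZ x (1 - 2 * Z.of_nat (S N))).
    + rewrite !powerRZ_Rp by lra. apply Rpower_shift_bound; try lra.
      rewrite IZR_p, S_INR. pose proof (pos_INR N). lra.
    + apply Rmult_le_compat_l; [left; apply Rpower_gt0|]. apply pow_mono; [lra|lia].
Qed.

Theorem proposition3p3 (M : R -> R -> R) (a : nat -> R) :
  is_mean M -> is_symmetric M -> is_homogeneous M ->
  sym_asymp_expansion M a ->
  forall s t : R, s <> t -> s <> - t ->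
    asymp_series (fun x => M (x + s) (x + t)) (coef_st a s t).
Proof.
  intros _ _ _ Hsym s t _ _ N.
  set (d := (t-s)/2). set (c := (s+t)/2).
  assert (H1 : asymN (fun x => sum_f_R0 (fun n => a n * d^(2*n) * powerRZ (x+c) (1 - 2*Z.of_nat n)) N)
                 (coef_st a s t) N).
  { eapply asymN_coef;
      [|apply (asymN_sum (fun n => a n * d^(2*n)) (fun n x => powerRZ (x+c) (1-2*Z.of_nat n))
              (fun n => en c n) N (fun n => expand_n c n N) N)].
    intros m Hm. cbv beta. apply coef_match; auto. }
  assert (H2 : little_o_infty
     (fun x => M (x+s) (x+t) - sum_f_R0 (fun n => a n * d^(2*n) * powerRZ (x+c) (1 - 2*Z.of_nat n)) N)
     (fun x => powerRZ x (1 - Z.of_nat N))).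
  { pose proof (Hsym d N) as H. apply (lo_shift _ _ c) in H.
    apply (lo_trans _ (fun x => powerRZ (x+c) (1 - 2*Z.of_nat N))); [|apply shift_pow_bound].
    eapply lo_ext; [|exact H]. intro x. cbv beta.
    replace (x + c - d) with (x+s) by (unfold c, d; field).
    replace (x + c + d) with (x+t) by (unfold c, d; field). reflexivity. }
  unfold asymN in H1.
  eapply lo_ext; [|apply (lo_add _ _ _ H2 H1)]. intro x. cbv beta. ring.
Qed.
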